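(* Let $\mathbf{A}=\langle A;\oplus,-,{}^{+},{}^{-},0,1\rangle$ be a quasi-MV* algebra and let $\mathbf{W}=\langle W;\to,\neg,{}^{+},{}^{-},1\rangle$ be a quasi-Wajsberg* algebra. Let $f(\mathbf{A})=\langle A;\to,\neg,{}^{+},{}^{-},1\rangle$, where $x\to y:=-x\oplus y$ and $\neg x:=-x$ (the operations ${}^+,{}^-$ and the constant $1$ are those of $\mathbf{A}$), and let $g(\mathbf{W})=\langle W;\oplus,-,{}^{+},{}^{-},0,1\rangle$, where $0:=x\to x$ (for any $x\in W$), $x\oplus y:=\neg x\to y$ and $-x:=\neg x$ (the operations ${}^+,{}^-$ and the constant $1$ are those of $\mathbf{W}$). Then $g(f(\mathbf{A}))=\mathbf{A}$ and $f(g(\mathbf{W}))=\mathbf{W}$; hence $f$ and $g$ are mutually inverse correspondences between quasi-MV* algebras and quasi-Wajsberg* algebras.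
   Context: A quasi-MV* algebra is an algebra $\langle A;\oplus,-,{}^{+},{}^{-},0,1\rangle$ of type $\langle2,1,1,1,0,0\rangle$ such that for all $x,y,z\in A$: (QMV*1) $x\oplus y=y\oplus x$; (QMV*2) $(1\oplus x)\oplus(y\oplus(1\oplus z))=((1\oplus x)\oplus y)\oplus(1\oplus z)$; (QMV*3) $(x\oplus 1)\oplus 1=1$; (QMV*4) $(x\oplus y)\oplus 0=x\oplus y$; (QMV*5) $x^{+}\oplus 0=(x\oplus 0)^{+}=1\oplus(-1\oplus x)$ and $x^{-}\oplus 0=(x\oplus 0)^{-}=-1\oplus(1\oplus x)$; (QMV*6) $x\oplus y=(x^{+}\oplus y^{+})\oplus(x^{-}\oplus y^{-})$; (QMV*7) $0=-0$; (QMV*8) $x\oplus(-x)=0$; (QMV*9) $-(x\oplus y)=-x\oplus(-y)$; (QMV*10) $-(-x)=x$; (QMV*11) $(-x\oplus(x\oplus y))^{+}=-x^{+}\oplus(x^{+}\oplus y^{+})$; (QMV*12) $x\vee y=y\vee x$; (QMV*13) $x\vee(y\vee z)=(x\vee y)\vee z$; (QMV*14) $x\oplus(y\vee z)=(x\oplus y)\vee(x\oplus z)$; where $x\vee y:=(x^{+}\oplus(-x^{+}\oplus y^{+})^{+})\oplus(x^{-}\oplus(-x^{-}\oplus y^{-})^{+})$. Here the postfix operations ${}^+,{}^-$ bind tighter than $-$, so e.g. $-x^{+}$ means $-(x^{+})$. A quasi-Wajsberg* algebra is an algebra $\langle W;\to,\neg,{}^{+},{}^{-},1\rangle$ of type $\langle2,1,1,1,0\rangle$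 such that for all $x,y,z\in W$: (QW*1) $x\to y=\neg y\to\neg x$; (QW*2) $(x\to 1)\to((y\to 1)\to z)=(y\to 1)\to((x\to 1)\to z)$; (QW*3) $(1\to x)\to 1=1$; (QW*4) $(z\to z)\to(x\to y)=x\to y$; (QW*5) $(1\to 1)\to x^{+}=((1\to 1)\to x)^{+}=(x\to 1)\to 1$ and $(1\to 1)\to x^{-}=((1\to 1)\to x)^{-}=(x\to\neg 1)\to\neg 1$; (QW*6) $x\to y=(y^{+}\to x^{-})\to(x^{+}\to y^{-})$; (QW*7) $\neg(x\to y)=y\to x$; (QW*8) $\neg\neg x=x$; (QW*9) $(x\to(\neg x\to y))^{+}=x^{+}\to(\neg x^{+}\to y^{+})$; (QW*10) $x\vee y=y\vee x$; (QW*11) $x\vee(y\vee z)=(x\vee y)\vee z$; (QW*12) $x\to(y\vee z)=(x\to y)\vee(x\to z)$; where $x\vee y:=((x^{+}\to y^{+})^{+}\to(\neg x)^{-})\to((y^{-}\to x^{-})^{-}\to x^{-})$. Conventions: ${}^+,{}^-$ bind tighter than $\neg$, which binds tighter than $\to$ (so $\neg x^{+}$ means $\neg(x^{+})$ and $\neg x\to y$ means $(\neg x)\to y$). In a quasi-Wajsberg* algebra $x\to x=y\to y$ for all $x,y$, so $0:=x\to x$ is well defined. *)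

(* Defs.v *)
Record qmv_sig (A : Type) := QMVSig {
  qoplus : A -> A -> A;
  qneg   : A -> A;
  qplus  : A -> A;
  qminus : A -> A;
  qzero  : A;
  qone   : A }.
Arguments QMVSig {A}.
Arguments qoplus {A}. Arguments qneg {A}. Arguments qplus {A}.
Arguments qminus {A}. Arguments qzero {A}. Arguments qone {A}.

Record qw_sig (W : Type) := QWSig {
  wimp   : W -> W -> W;
  wneg   : W -> W;
  wplus  : W -> W;
  wminus : W -> W;
  wone   : W }.
Arguments QWSig {W}.
Arguments wimp {W}. Arguments wneg {W}. Arguments wplus {W}.
Arguments wminus {W}. Arguments wone {W}.

Definition qmv_join {A} (a : qmv_sig A) (x y : A) : A :=
  let op := qoplus a in let n := qneg a in let p := qplus a in let m := qminus a in
  op (op (p x) (p (op (n (p x)) (p y)))) (op (m x) (p (op (n (m x)) (m y)))).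

Definition is_qmvstar {A} (a : qmv_sig A) : Prop :=
  let op := qoplus a in let n := qneg a in let p := qplus a in let m := qminus a in
  let z := qzero a in let o := qone a in let jn := qmv_join a in
  (forall x y, op x y = op y x) /\
  (forall x y w, op (op o x) (op y (op o w)) = op (op (op o x) y) (op o w)) /\
  (forall x, op (op x o) o = o) /\
  (forall x y, op (op x y) z = op x y) /\
  (forall x, op (p x) z = p (op x z) /\ p (op x z) = op o (op (n o) x)) /\
  (forall x, op (m x) z = m (op x z) /\ m (op x z) = op (n o) (op o x)) /\
  (forall x y, op x y = op (op (p x) (p y)) (op (m x) (m y))) /\
  (z = n z) /\
  (forall x, op x (n x) = z) /\
  (forall x y, n (op x y) = op (n x) (n y)) /\
  (forall x, n (n x) = x) /\
  (forall x y, p (op (n x) (op x y)) = op (n (p x)) (op (p x) (p y))) /\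
  (forall x y, jn x y = jn y x) /\
  (forall x y w, jn x (jn y w) = jn (jn x y) w) /\
  (forall x y w, op x (jn y w) = jn (op x y) (op x w)).

Definition qw_join {W} (w : qw_sig W) (x y : W) : W :=
  let i := wimp w in let n := wneg w in let p := wplus w in let m := wminus w in
  i (i (p (i (p x) (p y))) (m (n x))) (i (m (i (m y) (m x))) (m x)).

Definition is_qwstar {W} (w : qw_sig W) : Prop :=
  let i := wimp w in let n := wneg w in let p := wplus w in let m := wminus w in
  let o := wone w in let jn := qw_join w in
  (forall x y, i x y = i (n y) (n x)) /\
  (forall x y z, i (i x o) (i (i y o) z) = i (i y o) (i (i x o) z)) /\
  (forall x, i (i o x) o = o) /\
  (forall x y z, i (i z z) (i x y) = i x y) /\
  (forall x, i (i o o) (p x) = p (i (i o o) x) /\ p (i (i o o) x) = i (i x o) o) /\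
  (forall x, i (i o o) (m x) = m (i (i o o) x) /\ m (i (i o o) x) = i (i x (n o)) (n o)) /\
  (forall x y, i x y = i (i (p y) (m x)) (i (p x) (m y))) /\
  (forall x y, n (i x y) = i y x) /\
  (forall x, n (n x) = x) /\
  (forall x y, p (i x (i (n x) y)) = i (p x) (i (n (p x)) (p y))) /\
  (forall x y, jn x y = jn y x) /\
  (forall x y z, jn x (jn y z) = jn (jn x y) z) /\
  (forall x y z, i x (jn y z) = jn (i x y) (i x z)).

Definition f_qmv {A} (a : qmv_sig A) : qw_sig A :=
  QWSig (fun x y => qoplus a (qneg a x) y) (qneg a) (qplus a) (qminus a) (qone a).

Definition g_qw {W} (w : qw_sig W) : qmv_sig W :=
  QMVSig (fun x y => wimp w (wneg w x) y) (wneg w) (wplus w) (wminus w)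
         (wimp w (wone w) (wone w)) (wone w).

(* Main.v *)
Require Import Defs.
From Stdlib Require Import Setoid FunctionalExtensionality.

Lemma part1 (A : Type) (op : A -> A -> A) (n p m : A -> A) (z o : A) :
  is_qmvstar (QMVSig op n p m z o) -> is_qwstar (f_qmv (QMVSig op n p m z o)).
Proof.
  intros H. unfold is_qmvstar in H. cbn in H.
  destruct H as (C & A2 & A3 & A4 & A5 & A5m & A6 & A7 & A8 & A9 & A10 & A11 & A12 & A13 & A14).
  set (jn := qmv_join (QMVSig op n p m z o)) in *.
  assert (A14' : forall x y w, op x (jn y w) = jn (op x y) (op x w)) by exact A14.
  assert (z00 : op z z = z) by (rewrite A7 at 2; apply A8).
  assert (oreg : op o z = o).
  { transitivity (op (op (op z o) o) z). rewrite A3; reflexivity. rewrite A4. apply A3. }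
  assert (noreg : op (n o) z = n o).
  { rewrite A7 at 1. rewrite <- A9, oreg. reflexivity. }
  assert (p0 : p z = z).
  { rewrite <- z00 at 1. rewrite (proj2 (A5 z)). rewrite noreg. apply A8. }
  assert (m0 : m z = z).
  { rewrite <- z00 at 1. rewrite (proj2 (A5m z)). rewrite oreg, C. apply A8. }
  assert (J : forall y, jn y y = op y z).
  { intro y. unfold jn, qmv_join; cbn. rewrite (C (n (p y))), (C (n (m y))), !A8, p0.
    rewrite (A6 y z), p0, m0. reflexivity. }
  assert (L : forall x y, op x (op y z) = op x y).
  { intros x y. rewrite <- J, A14', J. apply A4. }
  assert (LL : forall x y, op (op x z) y = op x y).
  { intros x y. rewrite C, L. apply C. }
  assert (Rep : forall u u' v, op u z = op u' z -> op u v = op u' v).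
  { intros u u' v E. rewrite <- (LL u), E. apply LL. }
  assert (F1 : forall u, op (n (m u)) z = op (p (n u)) z).
  { intro u. rewrite (proj1 (A5 (n u))), (proj2 (A5 (n u))).
    rewrite A7, <- A9, (proj1 (A5m u)), (proj2 (A5m u)), !A9, A10. reflexivity. }
  assert (F2 : forall u, op (n (p u)) z = op (m (n u)) z).
  { intro u. rewrite (proj1 (A5m (n u))), (proj2 (A5m (n u))).
    rewrite A7, <- A9, (proj1 (A5 u)), (proj2 (A5 u)), !A9, A10. reflexivity. }
  assert (NA2 : forall x y w, op (op (n o) x) (op y (op (n o) w)) = op (op (op (n o) x) y) (op (n o) w)).
  { intros x y w. pose proof (f_equal n (A2 (n x) (n y) (n w))) as E.
    rewrite !A9, !A10 in E. exact E. }
  assert (JJ : forall x y, qw_join (f_qmv (QMVSig op n p m z o)) x y = jn x y).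
  { intros x y. unfold qw_join, jn, qmv_join; cbn.
    rewrite A9, A10.
    f_equal.
    - rewrite C. apply Rep. rewrite F1, A10. reflexivity.
    - rewrite (C (m x) (p _)). apply Rep. rewrite F1, A9, A10, (C (m y)). reflexivity. }
  unfold is_qwstar. cbn -[qw_join].
  split; [|split; [|split; [|split; [|split; [|split; [|split; [|split; [|split; [|split; [|split; [|split]]]]]]]]]]].
  - intros x y. rewrite A10. apply C.
  - intros x y w. rewrite !A9, !A10.
    rewrite (C x (n o)), (C y (n o)).
    rewrite (C (op (n o) y) w), NA2, C.
    rewrite (C (op (n o) x) w), NA2, C. reflexivity.
  - intro x. rewrite A9, A10, (C o (n x)). apply A3.
  - intros x y w. rewrite (C (n w) w), A8, <- A7, C. apply A4.
  - intro x. rewrite (C (n o) o), A8, <- A7, A9, A10, (C z), (C z).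
    rewrite (proj1 (A5 x)), (proj2 (A5 x)). split; [reflexivity|].
    rewrite (C (op x (n o))), (C x). reflexivity.
  - intro x. rewrite (C (n o) o), A8, <- A7, A9, !A10, (C z), (C z).
    rewrite (proj1 (A5m x)), (proj2 (A5m x)). split; [reflexivity|].
    rewrite (C (op x o)), (C x). reflexivity.
  - intros x y. rewrite A9, A10, (A6 (n x) y). f_equal.
    + rewrite (C (p y) (n (m x))). apply Rep. rewrite F1. reflexivity.
    + apply Rep. rewrite F2. reflexivity.
  - intros x y. rewrite A9, A10. apply C.
  - exact A10.
  - intros x y. rewrite !A10. apply A11.
  - intros x y. rewrite !JJ. apply A12.
  - intros x y w. rewrite !JJ. apply A13.
  - intros x y w. rewrite !JJ. apply A14'.
Qed.

Lemma part2 (W : Type) (i : W -> W -> W) (n p m : W -> W) (o : W) :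
  is_qwstar (QWSig i n p m o) -> is_qmvstar (g_qw (QWSig i n p m o)).
Proof.
  intros H. unfold is_qwstar in H. cbn in H.
  destruct H as (W1 & W2 & W3 & W4 & W5 & W5m & W6 & W7 & W8 & W9 & W10 & W11 & W12).
  set (jn := qw_join (QWSig i n p m o)) in *.
  assert (W12' : forall x y w, i x (jn y w) = jn (i x y) (i x w)) by exact W12.
  assert (zz : forall x, i x x = (i o o)).
  { intro x. transitivity (i (i o o) (i x x)). symmetry; apply W4.
    rewrite W1, !W7. apply W4. }
  assert (nZ : n (i o o) = (i o o)) by (apply W7).
  assert (Zo : i (i o o) o = o).
  { transitivity (i (i o o) (i (i o o) o)). f_equal; symmetry; apply W3. rewrite W4. apply W3. }
  assert (Zno : i (i o o) (n o) = n o).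
  { transitivity (i (i o o) (n (i (i o o) o))). rewrite (W3 o); reflexivity.
    rewrite W7, W4, <- W7, W3. reflexivity. }
  assert (pZ : p (i o o) = (i o o)).
  { rewrite <- (zz (i o o)) at 1. rewrite (proj2 (W5 (i o o))). rewrite Zo. reflexivity. }
  assert (mZ : m (i o o) = (i o o)).
  { rewrite <- (zz (i o o)) at 1. rewrite (proj2 (W5m (i o o))). rewrite Zno. apply zz. }
  assert (NR : forall u, n (i (i o o) u) = i (i o o) (n u)).
  { intro u. rewrite W7, W1, nZ. reflexivity. }
  assert (G1 : forall u, i (i o o) (n (p u)) = i (i o o) (m (n u))).
  { intro u. rewrite <- NR. rewrite (proj1 (W5 u)), (proj2 (W5 u)).
    rewrite (proj1 (W5m (n u))), (proj2 (W5m (n u))). rewrite W7.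
    rewrite (W1 (i (n u) (n o))), W8, W7. rewrite (W1 (n o) (n u)), !W8. reflexivity. }
  assert (G2 : forall u, i (i o o) (n (m u)) = i (i o o) (p (n u))).
  { intro u. rewrite <- NR. rewrite (proj1 (W5m u)), (proj2 (W5m u)).
    rewrite (proj1 (W5 (n u))), (proj2 (W5 (n u))). rewrite W7.
    rewrite (W1 (i (n u) o)), W7. rewrite (W1 o (n u)), !W8. reflexivity. }
  assert (JW : forall y, jn y y = i (i o o) y).
  { intro y. unfold jn, qw_join; cbn. rewrite (zz (p y)), (zz (m y)), pZ, mZ.
    rewrite (W6 (i o o) y), pZ, mZ. f_equal. rewrite (W1 (p y)), nZ, G1. reflexivity. }
  assert (LW : forall x y, i x (i (i o o) y) = i x y).
  { intros x y. rewrite <- JW, W12', JW. apply W4. }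
  assert (LWl : forall x y, i (i (i o o) x) y = i x y).
  { intros x y. rewrite W1, NR, LW. symmetry. apply W1. }
  assert (RepR : forall u u' v, i (i o o) u = i (i o o) u' -> i v u = i v u').
  { intros u u' v E. rewrite <- (LW v u), E. apply LW. }
  assert (RepL : forall u u' v, i (i o o) u = i (i o o) u' -> i u v = i u' v).
  { intros u u' v E. rewrite <- (LWl u v), E. apply LWl. }
  pose (op := fun x y => i (n x) y).
  assert (O1 : forall x y, op x y = op y x).
  { intros x y. unfold op. rewrite W1, W8. reflexivity. }
  assert (O9 : forall x y, n (op x y) = op (n x) (n y)).
  { intros x y. unfold op. rewrite W7, W8, (W1 x). rewrite W8. reflexivity. }
  assert (Sym1 : forall x y w, op (op (n o) x) (op (op (n o) y) w) = op (op (n o) y) (op (op (n o) x) w)).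
  { intros x y w. unfold op. rewrite !W8, !W7. apply W2. }
  assert (Sym2 : forall x y w, op (op o x) (op (op o y) w) = op (op o y) (op (op o x) w)).
  { intros x y w. pose proof (f_equal n (Sym1 (n x) (n y) (n w))) as E.
    rewrite !O9, !W8 in E. exact E. }
  assert (JJ : forall x y, qmv_join (g_qw (QWSig i n p m o)) x y = jn x y).
  { intros x y. unfold jn, qmv_join, qw_join; cbn. rewrite !W8, W7. f_equal.
    - apply RepR. rewrite G1. reflexivity.
    - rewrite W1, W8. apply RepL. rewrite G1, W7. reflexivity. }
  unfold is_qmvstar. cbn -[qmv_join].
  assert (RZ : forall u, i (n u) (i o o) = i (i o o) u).
  { intro u. rewrite W1, nZ, W8. reflexivity. }
  split; [|split; [|split; [|split; [|split; [|split; [|split; [|split; [|split; [|split; [|split; [|split; [|split; [|split]]]]]]]]]]]]].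
  - intros x y. exact (O1 x y).
  - intros x y w. change (op (op o x) (op y (op o w)) = op (op (op o x) y) (op o w)).
    rewrite (O1 y (op o w)), Sym2. apply O1.
  - intro x. rewrite W7. apply W3.
  - intros x y. rewrite W7, W1, nZ, W7. apply W4.
  - intro x. rewrite !RZ, W8. destruct (W5 x) as [E1 E2]. split; [exact E1|].
    rewrite E2, W1, W7. reflexivity.
  - intro x. rewrite !RZ, W8. destruct (W5m x) as [E1 E2]. split; [exact E1|].
    rewrite E2, W1, W8, W7. reflexivity.
  - intros x y. rewrite W7, (W6 (n x) y). f_equal.
    + apply RepR. rewrite G1. reflexivity.
    + apply RepL. rewrite G2. reflexivity.
  - rewrite W7. reflexivity.
  - intro x. apply zz.
  - intros x y. exact (O9 x y).
  - exact W8.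
  - intros x y. rewrite !W8. apply W9.
  - intros x y. rewrite !JJ. apply W10.
  - intros x y w. rewrite !JJ. apply W11.
  - intros x y w. rewrite !JJ. apply W12'.
Qed.

Theorem theorem3p1 :
  forall (A : Type) (a : qmv_sig A) (W : Type) (w : qw_sig W),
    is_qmvstar a -> is_qwstar w ->
    is_qwstar (f_qmv a) /\ is_qmvstar (g_qw w) /\
    g_qw (f_qmv a) = a /\ f_qmv (g_qw w) = w.
Proof.
  intros A [op n p m z o] W [i wn wp wm wo] Ha Hw.
  split; [apply part1; exact Ha|].
  split; [apply part2; exact Hw|].
  split.
  - unfold is_qmvstar in Ha; cbn in Ha.
    destruct Ha as (C & _ & _ & _ & _ & _ & _ & _ & A8 & _ & A10 & _).
    unfold g_qw, f_qmv; cbn. rewrite C, A8. f_equal.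
    apply functional_extensionality; intro x.
    apply functional_extensionality; intro y. rewrite A10. reflexivity.
  - unfold is_qwstar in Hw; cbn in Hw.
    destruct Hw as (_ & _ & _ & _ & _ & _ & _ & _ & W8 & _).
    unfold g_qw, f_qmv; cbn. f_equal.
    apply functional_extensionality; intro x.
    apply functional_extensionality; intro y. rewrite W8. reflexivity.
Qed.
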